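(* Let $\mathcal P$ be a path, $(p_1,\dots,p_m)$ an ordered list of plaquettes, and $(q_1,\dots,q_m)$ any permutation of it. Then for every configuration $\vec i$, $\theta_{\mathcal P}(\vec i,p_1,\dots,p_m)=\theta_{\mathcal P}(\vec i,q_1,\dots,q_m)$.
   Context: Let $\Lambda$ be a hexagonal (honeycomb) lattice embedded in a closed orientable surface, with one qubit on each edge. For an edge $j$, $\sigma^x_j,\sigma^z_j$ denote the Pauli operators on qubit $j$ and $n^{\pm}_j=\tfrac12(1\pm\sigma^z_j)$. A (string) configuration $\vec i$ is a computational basis state, viewed as a bit string assigning $0$ (empty) or $1$ (occupied) to each edge; $\vec i\oplus\vec\alpha$ is bitwise addition mod 2. For a hexagonal plaquette $p$, label its boundary edges $1,\dots,6$ cyclically (index $0$ means $6$) and its outgoing edges so that edge $12$ meets edges $6,1$; edge $7$ meets $1,2$; edge $8$ meets $2,3$; edge $9$ meets $3,4$; edge $10$ meets $4,5$; edge $11$ meets $5,6$. Define $B_p=\Big(\prod_{j=1}^6\sigma^x_j\Big)\Big(\prod_{j=1}^6(-1)^{n^-_{j-1}n^+_j}\Big)\,i^{n^-_{12}(n^-_1n^-_6-n^+_1n^+_6)}\,i^{n^-_7(n^+_1n^+_2-n^-_1n^-_2)}\,i^{n^+_8(n^-_2n^+_3-n^+_2n^-_3)}\,i^{n^-_9(n^-_3n^-_4-n^+_3n^+_4)}\,i^{n^-_{10}(n^+_4n^+_5-n^-_4n^-_5)}\,i^{n^+_{11}(n^-_5n^+_6-n^+_5n^-_6)}$; all $B_p$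 commute pairwise and square to the identity. Write $B_p=\prod_{j\in\partial p}\sigma^x_j\sum_{\vec i}b_p(\vec i)|\vec i\rangle\langle\vec i|$, defining the phase $b_p(\vec i)$. Let $\vec\alpha^p$ be the configuration occupied exactly on the boundary edges of $p$. For a path $\mathcal P$ (a sequence of edges forming a walk), $\vec\alpha^{\mathcal P}$ is the mod-2 sum of the indicators of its edges. Define $\theta_{\mathcal P}(\vec i,p_1,\dots,p_m)=\prod_{k=1}^m \frac{b_{p_k}(\vec i\oplus\vec\alpha^{\mathcal P}\oplus\bigoplus_{j<k}\vec\alpha^{p_j})}{b_{p_k}(\vec i\oplus\bigoplus_{j<k}\vec\alpha^{p_j})}$. *)

(* Defs.v *)
From HB Require Import structures.
From mathcomp Require Import all_boot all_order all_algebra all_field.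
Set Implicit Arguments. Unset Strict Implicit. Unset Printing Implicit Defensive.
Import Order.TTheory GRing.Theory Num.Theory.
Local Open Scope ring_scope.

(* Abstract hexagonal-lattice data:
   E  : the edges (one qubit per edge),
   Pl : the hexagonal plaquettes,
   lab p k : the edge of plaquette p carrying label k.+1 (k : 'I_12);
   labels 1..6 are the boundary edges (cyclic), 7..12 the outgoing edges,
   following the convention of the paper. *)

(* A string configuration: a bit (false = empty, true = occupied) per edge. *)
Definition config (E : finType) := {ffun E -> bool}.

Definition cxor (E : finType) (x y : config E) : config E :=
  [ffun e => x e (+) y e].

Definition edge_of (E Pl : finType) (lab : Pl -> 'I_12 -> E) (p : Pl) (k : nat) : E :=
  lab p (inord k.-1).

Definition alpha_plaq (E Pl : finType) (lab : Pl -> 'I_12 -> E) (p : Pl) : config E :=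
  [ffun e => [exists k : 'I_12, (k < 6)%N && (lab p k == e)]].

Definition alpha_path (E : finType) (P : seq E) : config E :=
  [ffun e => odd (count_mem e P)].

(* n^-_j = 1 iff edge j occupied (sigma^z = -1); n^+_j = 1 - n^-_j *)
Definition nm (E : finType) (i : config E) (e : E) : int := (i e : nat)%:Z.
Definition np (E : finType) (i : config E) (e : E) : int := 1 - nm i e.

Definition bphase (E Pl : finType) (lab : Pl -> 'I_12 -> E) (p : Pl) (i : config E)
  : algC :=
  let m k := nm i (edge_of lab p k) in
  let n k := np i (edge_of lab p k) in
  let prev j := if j == 1%N then 6%N else j.-1 in
  (\prod_(1 <= j < 7) (-1) ^ (m (prev j) * n j)) *
  ('i ^ (m 12%N * (m 1%N * m 6%N - n 1%N * n 6%N))) *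
  ('i ^ (m 7%N * (n 1%N * n 2%N - m 1%N * m 2%N))) *
  ('i ^ (n 8%N * (m 2%N * n 3%N - n 2%N * m 3%N))) *
  ('i ^ (m 9%N * (m 3%N * m 4%N - n 3%N * n 4%N))) *
  ('i ^ (m 10%N * (n 4%N * n 5%N - m 4%N * m 5%N))) *
  ('i ^ (n 11%N * (m 5%N * n 6%N - n 5%N * m 6%N))).

(* Operators on the span of configurations, as matrices indexed by configs:
   op j i = <j| A |i>. *)
Definition op (E : finType) := config E -> config E -> algC.

Definition opmul (E : finType) (A B : op E) : op E :=
  fun j i => \sum_(k : config E) A j k * B k i.

(* B_p = (prod_{j in dp} sigma^x_j) sum_i b_p(i)|i><i|, so
   <j|B_p|i> = b_p(i) [j = i (+) alpha^p]. *)
Definition Bop (E Pl : finType) (lab : Pl -> 'I_12 -> E) (p : Pl) : op E :=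
  fun j i => if j == cxor i (alpha_plaq lab p) then bphase lab p i else 0.

(* theta_P(i, p_1, ..., p_m) with running accumulators
   x = i (+) alpha^P (+) sum_{j<k} alpha^{p_j},  y = i (+) sum_{j<k} alpha^{p_j} *)
Fixpoint theta_rec (E Pl : finType) (lab : Pl -> 'I_12 -> E)
    (x y : config E) (ps : seq Pl) : algC :=
  match ps with
  | [::] => 1
  | p :: ps' => bphase lab p x / bphase lab p y *
      theta_rec lab (cxor x (alpha_plaq lab p)) (cxor y (alpha_plaq lab p)) ps'
  end.

Definition theta (E Pl : finType) (lab : Pl -> 'I_12 -> E)
    (P : seq E) (i : config E) (ps : seq Pl) : algC :=
  theta_rec lab (cxor i (alpha_path P)) i ps.

(* Main.v *)
Require Import Defs.
From HB Require Import structures.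
From mathcomp Require Import all_boot all_order all_algebra all_field.
Import GRing.Theory Num.Theory.
Local Open Scope ring_scope.

Lemma cxorAC (E : finType) (x a b : config E) :
  cxor (cxor x a) b = cxor (cxor x b) a.
Proof. by apply/ffunP => e; rewrite !ffunE addbAC. Qed.

Lemma bphase_neq0 (E Pl : finType) (lab : Pl -> 'I_12 -> E) p i :
  bphase lab p i != 0.
Proof.
have hi : ('i : algC) != 0 := @neq0Ci _.
have hm : (-1 : algC) != 0 by rewrite oppr_eq0 oner_eq0.
rewrite /bphase /=; rewrite !mulf_neq0 ?expfz_neq0 //.
rewrite prodf_seq_neq0; apply/allP => j _; exact: expfz_neq0.
Qed.

Lemma opmulB (E Pl : finType) (lab : Pl -> 'I_12 -> E) p q j i :
  opmul (Bop lab p) (Bop lab q) j i =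
  if j == cxor (cxor i (alpha_plaq lab q)) (alpha_plaq lab p)
  then bphase lab p (cxor i (alpha_plaq lab q)) * bphase lab q i else 0.
Proof.
rewrite /opmul (bigD1 (cxor i (alpha_plaq lab q))) //= big1 ?addr0.
  by rewrite /Bop eqxx; case: ifP; rewrite ?mulr1 ?mul0r.
by move=> k /negbTE hk; rewrite /Bop hk mulr0.
Qed.

Lemma phase_comm (E Pl : finType) (lab : Pl -> 'I_12 -> E)
  (Bcomm : forall p q j i,
      opmul (Bop lab p) (Bop lab q) j i = opmul (Bop lab q) (Bop lab p) j i)
  p q x :
  bphase lab p (cxor x (alpha_plaq lab q)) * bphase lab q x =
  bphase lab q (cxor x (alpha_plaq lab p)) * bphase lab p x.
Proof.
have := Bcomm p q (cxor (cxor x (alpha_plaq lab q)) (alpha_plaq lab p)) x.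
by rewrite !opmulB eqxx cxorAC eqxx.
Qed.

Section S.
Variables (E Pl : finType) (lab : Pl -> 'I_12 -> E).
Hypothesis Bcomm : forall p q j i,
      opmul (Bop lab p) (Bop lab q) j i = opmul (Bop lab q) (Bop lab p) j i.

Arguments bphase : simpl never.

Lemma swap2 x y p q s :
  theta_rec lab x y (p :: q :: s) = theta_rec lab x y (q :: p :: s).
Proof.
have H4 : forall a b c d T : algC, a / b * (c / d * T) = (a*c)/(b*d) * T.
  by move=> *; rewrite mulrA mulf_div.
rewrite /= (cxorAC _ x) (cxorAC _ y) !H4; congr (_ * _).
have Hx := phase_comm _ _ _ Bcomm p q x.
have Hy := phase_comm _ _ _ Bcomm p q y.
rewrite (mulrC (bphase lab p x)) (mulrC (bphase lab p y)) -Hx -Hy.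
by congr (_ / _); apply: mulrC.
Qed.

Lemma move_front s : forall x y p, p \in s ->
  theta_rec lab x y s = theta_rec lab x y (p :: rem p s).
Proof.
elim: s => [//|a s IH] x y p.
rewrite inE => hp.
case: (eqVneq a p) => [<-|hne]; first by rewrite /= eqxx.
have -> : rem p (a :: s) = a :: rem p s by rewrite /= (negbTE hne).
rewrite eq_sym (negbTE hne) /= in hp.
by rewrite swap2 /= (IH _ _ p hp).
Qed.

Lemma perm_theta ps : forall qs x y, perm_eq ps qs ->
  theta_rec lab x y ps = theta_rec lab x y qs.
Proof.
elim: ps => [|p ps IH] qs x y hpq.
  by move: hpq; rewrite perm_sym => /perm_nilP ->.
have hp : p \in qs by rewrite -(perm_mem hpq) mem_head.
rewrite (move_front _ _ _ _ hp) /=; congr (_ * _); apply: IH.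
by rewrite -(perm_cons p) (perm_trans hpq) // perm_to_rem.
Qed.
End S.

Theorem lemma1 (E Pl : finType) (lab : Pl -> 'I_12 -> E)
  (lab_inj : forall p, injective (lab p))
  (Bcomm : forall p q j i,
      opmul (Bop lab p) (Bop lab q) j i = opmul (Bop lab q) (Bop lab p) j i)
  (Bsq : forall p j i, opmul (Bop lab p) (Bop lab p) j i = (j == i)%:R)
  (P : seq E) (ps qs : seq Pl) (hperm : perm_eq ps qs) (i : config E) :
  theta lab P i ps = theta lab P i qs.
Proof. exact: (perm_theta _ _ _ Bcomm). Qed.
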